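(* Let $N\ge1$ and $H\ge1$ be constants. Let $z_1,\dots,z_n$ be numbers with $0\le z_k\le H$, and define $Z_0,Z_1,\dots,Z_n$ by $1\le Z_0\le 2H-1$ and $Z_k=Z_{k-1}+z_k$ for $k\ge1$. Then for all $n\ge1$, \[ \sum_{k=1}^n\frac{z_k}{\sqrt{kN+Z_{k-1}}}\le\sum_{k=1}^n\sqrt{\frac{(k+1)H-1}{kN+(k+1)H-1}}\,\frac{z_k}{\sqrt{Z_{k-1}}}\le\sqrt{\frac{2H-1}{N+2H-1}}\sum_{k=1}^n\frac{z_k}{\sqrt{Z_{k-1}}}. \] *)

(* Defs.v *)
From HB Require Import structures.
From mathcomp Require Import all_boot all_order all_algebra.
Set Implicit Arguments. Unset Strict Implicit. Unset Printing Implicit Defensive.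

(* Main.v *)
Require Import Defs.
From HB Require Import structures.
From mathcomp Require Import all_boot all_order all_algebra.
From mathcomp Require Import ring lra.
Import Order.TTheory GRing.Theory Num.Theory.
Local Open Scope ring_scope.
Lemma term1 (R : rcfType) (z Z a c : R) : 0 <= z -> 0 < Z -> Z <= a -> 0 < c ->
  z / Num.sqrt (c + Z) <= Num.sqrt (a / (c + a)) * (z / Num.sqrt Z).
Proof.
move=> z0 Z0 Za c0.
have a0 : 0 < a by apply: lt_le_trans Za.
rewrite mulrCA ler_wpM2l //.
have sZ : 0 < Num.sqrt Z by rewrite sqrtr_gt0.
have scZ : 0 < Num.sqrt (c + Z) by rewrite sqrtr_gt0; lra.
rewrite -[(Num.sqrt (c + Z))^-1]div1r ler_pdivrMr // mulrAC ler_pdivlMr //.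
rewrite -sqrtrM; last by apply: divr_ge0; lra.
rewrite mul1r ler_sqrt; last by apply: mulr_ge0; [apply: divr_ge0|]; lra.
rewrite mulrAC ler_pdivlMr; last lra.
rewrite -subr_ge0; have -> : a * (c + Z) - Z * (c + a) = c * (a - Z) by ring.
apply: mulr_ge0; lra.
Qed.

Lemma term2 (R : rcfType) (N H : R) (k : nat) : 1 <= N -> 1 <= H -> (1 <= k)%N ->
  Num.sqrt ((k.+1%:R * H - 1) / (k%:R * N + k.+1%:R * H - 1)) <=
  Num.sqrt ((2 * H - 1) / (N + 2 * H - 1)).
Proof.
move=> hN hH hk.
have k1 : 1 <= k%:R :> R by rewrite ler1n.
rewrite ler_sqrt; last by apply: divr_ge0; lra.
rewrite -natr1.
rewrite ler_pdivrMr; last nra.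
rewrite mulrAC ler_pdivlMr; last lra.
rewrite -subr_ge0; set x := k%:R.
have -> : (2 * H - 1) * (x * N + (x + 1) * H - 1) - ((x + 1) * H - 1) * (N + 2 * H - 1) = N * ((x - 1) * (H - 1)) by ring.
apply: mulr_ge0; first lra. apply: mulr_ge0; lra.
Qed.

Theorem corollary6 (R : rcfType) (N H : R) (n : nat) (z Z : nat -> R)
  (hN : 1 <= N) (hH : 1 <= H) (hn : (1 <= n)%N)
  (hz : forall k : nat, (1 <= k <= n)%N -> 0 <= z k <= H)
  (hZ0 : 1 <= Z 0%N <= 2 * H - 1)
  (hZ : forall k : nat, (1 <= k <= n)%N -> Z k = Z k.-1 + z k) :
  \sum_(1 <= k < n.+1) z k / Num.sqrt (k%:R * N + Z k.-1)
    <= \sum_(1 <= k < n.+1)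
         Num.sqrt ((k.+1%:R * H - 1) / (k%:R * N + k.+1%:R * H - 1))
           * (z k / Num.sqrt (Z k.-1))
  /\
  \sum_(1 <= k < n.+1)
         Num.sqrt ((k.+1%:R * H - 1) / (k%:R * N + k.+1%:R * H - 1))
           * (z k / Num.sqrt (Z k.-1))
    <= Num.sqrt ((2 * H - 1) / (N + 2 * H - 1))
         * \sum_(1 <= k < n.+1) z k / Num.sqrt (Z k.-1).
Proof.
have bnd : forall k, (k <= n)%N -> 1 <= Z k <= Z 0%N + k%:R * H.
  elim=> [|k IH] kn; first by rewrite mul0r addr0 lexx andbT; case/andP: hZ0.
  have kn' : (k <= n)%N by apply: ltnW.
  have /andP[h1 h2] := IH kn'.
  have /andP[z0 zH] : 0 <= z k.+1 <= H by apply: hz; rewrite kn.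
  rewrite hZ ?kn //= -natr1. apply/andP; split; lra.
split.
  apply: ler_sum_nat => k /andP[k1 kn].
  case: k k1 kn => // k _ kn /=.
  have /andP[z0 zH] := hz k.+1 kn.
  have /andP[h1 h2] := bnd k (ltnW kn).
  have k0 : 0 <= k%:R :> R by [].
  case/andP: hZ0 => _ hZ1.
  rewrite -addrA; apply: term1 => //; first lra.
    rewrite -!natr1; nra.
  rewrite -natr1; nra.
rewrite mulr_sumr; apply: ler_sum_nat => k /andP[k1 kn].
have kk : (0 < k <= n)%N by rewrite k1 -ltnS.
have /andP[z0 zH] := hz k kk.
rewrite ler_wpM2r //; first by apply: divr_ge0 => //; apply: sqrtr_ge0.
exact: term2.
Qed.
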